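(* Let $m\ge 1$ and consider any complete run of the labeled chip-firing process on $\mathbb{Z}$ starting with $2m$ chips labeled $-m,\dots,-1,1,\dots,m$ at site $0$. For integers $x,y\ge 0$ let the firing move $(x,y)$ denote the $(\min(x,y)+1)$-th to last firing move performed at site $x-y$ in this run. Then for each chip $k$ with $-m\le k<0$ and each $x$ with $0\le x\le m-1$, the position of chip $k$ immediately preceding firing move $(x,-k-1)$ is at most $x+k+1$. Similarly, for each chip $k$ with $0<k\le m$ and each $y$ with $0\le y\le m-1$, the position of chip $k$ immediately preceding firing move $(k-1,y)$ is at least $k-1-y$.
   Context: Labeled chip-firing on the infinite path graph $\mathbb{Z}$ (each integer $i$ adjacent to $i-1$ and $i+1$): a firing move consists of choosing two chips with labels $a<b$ located at a common site $i$, and moving chip $a$ to site $i-1$ and chip $b$ to site $i+1$. A complete run is a sequence of legal firing moves ending in a configuration where all chips occupy distinct sites (so no further firing move is possible). *)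

(* Defs.v *)
From Stdlib Require Import ZArith List Lia.
Import ListNotations.
Open Scope Z_scope.

Definition is_label (m k : Z) : Prop := k <> 0 /\ -m <= k <= m.

(* A configuration assigns a site of Z to each label (values at non-labels
   are irrelevant). *)
Definition config := Z -> Z.

Definition init_config : config := fun _ => 0.

(* A firing move is recorded as the pair (a, b) of labels of the two chips
   fired: chip a moves one step left, chip b one step right. *)
Definition fire (c : config) (mv : Z * Z) : config :=
  fun j => if Z.eq_dec j (fst mv) then c (fst mv) - 1
           else if Z.eq_dec j (snd mv) then c (snd mv) + 1
           else c j.

Definition legal (m : Z) (c : config) (mv : Z * Z) : Prop :=
  is_label m (fst mv) /\ is_label m (snd mv) /\ fst mv < snd mv /\
  c (fst mv) = c (snd mv).

(* Configuration immediately before move number t (0-based), i.e. after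
   performing the first t moves of the run starting from init_config. *)
Definition config_at (mvs : list (Z * Z)) (t : nat) : config :=
  fold_left fire (firstn t mvs) init_config.

Definition site (mvs : list (Z * Z)) (t : nat) : Z :=
  config_at mvs t (fst (nth t mvs (0, 0))).

Definition valid_run (m : Z) (mvs : list (Z * Z)) : Prop :=
  forall t : nat, (t < length mvs)%nat ->
    legal m (config_at mvs t) (nth t mvs (0, 0)).

(* All chips on distinct sites (no further move possible). *)
Definition stable (m : Z) (c : config) : Prop :=
  forall k l, is_label m k -> is_label m l -> k <> l -> c k <> c l.

Definition complete_run (m : Z) (mvs : list (Z * Z)) : Prop :=
  valid_run m mvs /\ stable m (config_at mvs (length mvs)).

Definition firings_after (mvs : list (Z * Z)) (s : Z) (t : nat) : nat :=
  length (filter (fun t' => Z.eqb (site mvs t') s)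
                 (seq (S t) (length mvs - S t))).

(* Move number t is the firing move (x, y): the (min(x,y)+1)-th to last
   firing move at site x - y, i.e. it is a move at site x - y followed by
   exactly min(x,y) later moves at site x - y. *)
Definition is_move_xy (mvs : list (Z * Z)) (x y : Z) (t : nat) : Prop :=
  (t < length mvs)%nat /\ site mvs t = x - y /\
  firings_after mvs (x - y) t = Z.to_nat (Z.min x y).

(* Main.v *)
Require Import Defs.
From Stdlib Require Import ZArith List Lia Bool.
Import ListNotations.
Open Scope Z_scope.

Lemma firstn_S_nth {A} (l : list A) t d : (t < length l)%nat ->
  firstn (S t) l = firstn t l ++ [nth t l d].
Proof.
  revert t; induction l as [|h l IH]; intros t Ht; simpl in *; [lia|].
  destruct t; simpl; [reflexivity|]. rewrite IH by lia. reflexivity.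
Qed.

Lemma config_S mvs t : (t < length mvs)%nat ->
  config_at mvs (S t) = fire (config_at mvs t) (nth t mvs (0,0)).
Proof.
  intros H. unfold config_at. rewrite (firstn_S_nth _ _ (0,0) H), fold_left_app.
  reflexivity.
Qed.

Definition Fc (mvs : list (Z*Z)) (u : Z) (t : nat) : Z :=
  Z.of_nat (length (filter (fun t' => Z.eqb (site mvs t') u) (seq 0 t))).

Lemma Fc_0 mvs u : Fc mvs u 0 = 0.
Proof. reflexivity. Qed.

Lemma Fc_S mvs u t : Fc mvs u (S t) = Fc mvs u t + (if Z.eqb (site mvs t) u then 1 else 0).
Proof.
  unfold Fc. rewrite seq_S, filter_app, length_app. simpl.
  destruct (Z.eqb _ _); simpl; lia.
Qed.

Lemma Fc_nonneg mvs u t : 0 <= Fc mvs u t.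
Proof. unfold Fc; lia. Qed.

Lemma Fc_mono mvs u t1 t2 : (t1 <= t2)%nat -> Fc mvs u t1 <= Fc mvs u t2.
Proof.
  induction 1; [lia|]. rewrite Fc_S. destruct (Z.eqb _ _); lia.
Qed.

Lemma Fc_strict mvs u t1 t' t2 : (t1 <= t')%nat -> (t' < t2)%nat -> site mvs t' = u ->
  Fc mvs u t1 < Fc mvs u t2.
Proof.
  intros H1 H2 H3.
  pose proof (Fc_mono mvs u t1 t' H1).
  pose proof (Fc_mono mvs u (S t') t2 H2).
  rewrite Fc_S in H0. rewrite H3, Z.eqb_refl in H0. lia.
Qed.

Lemma Fc_uniq mvs u t1 t2 : site mvs t1 = u -> site mvs t2 = u ->
  Fc mvs u t1 = Fc mvs u t2 -> t1 = t2.
Proof.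
  intros H1 H2 H3.
  destruct (Nat.lt_total t1 t2) as [H|[H|H]]; auto.
  - pose proof (Fc_strict mvs u t1 t1 t2 (le_n _) H H1). lia.
  - pose proof (Fc_strict mvs u t2 t2 t1 (le_n _) H H2). lia.
Qed.

Lemma fa_eq mvs s t : (t < length mvs)%nat ->
  Z.of_nat (firings_after mvs s t) = Fc mvs s (length mvs) - Fc mvs s (S t).
Proof.
  intros H. unfold firings_after, Fc.
  assert (E : seq 0 (length mvs) = seq 0 (S t) ++ seq (S t) (length mvs - S t)).
  { rewrite <- seq_app. f_equal. lia. }
  rewrite E, filter_app, length_app. lia.
Qed.

Lemma Fc_attain mvs u t k : 0 <= k < Fc mvs u t ->
  exists t', (t' < t)%nat /\ site mvs t' = u /\ Fc mvs u t' = k.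
Proof.
  induction t as [|t IH]; intros Hk.
  - rewrite Fc_0 in Hk; lia.
  - rewrite Fc_S in Hk.
    destruct (Z.eqb_spec (site mvs t) u) as [E|E].
    + destruct (Z.eq_dec k (Fc mvs u t)) as [->|Hne].
      * exists t; repeat split; auto.
      * destruct IH as [t' [? [? ?]]]; [lia|]. exists t'; repeat split; auto.
    + destruct IH as [t' [? [? ?]]]; [lia|]. exists t'; repeat split; auto.
Qed.

Fixpoint cntp (p : Z -> bool) (l : list Z) : Z :=
  match l with [] => 0 | j :: l' => (if p j then 1 else 0) + cntp p l' end.

Lemma cntp_nonneg p l : 0 <= cntp p l.
Proof. induction l; simpl; [lia|]. destruct (p a); lia. Qed.

Lemma cntp_app p l1 l2 : cntp p (l1 ++ l2) = cntp p l1 + cntp p l2.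
Proof. induction l1; simpl; [lia|]. rewrite IHl1; lia. Qed.

Lemma cntp_ext p q l : (forall j, In j l -> p j = q j) -> cntp p l = cntp q l.
Proof.
  induction l; simpl; intros H; [reflexivity|].
  rewrite H by auto. rewrite IHl by auto. reflexivity.
Qed.

Lemma cntp_le p q l : (forall j, In j l -> p j = true -> q j = true) -> cntp p l <= cntp q l.
Proof.
  induction l; simpl; intros H; [lia|].
  specialize (IHl (fun j Hj => H j (or_intror Hj))).
  destruct (p a) eqn:E1; [rewrite (H a (or_introl eq_refl) E1); lia|].
  destruct (q a); lia.
Qed.

Lemma cntp_split p q l : cntp p l = cntp (fun j => p j && q j) l + cntp (fun j => p j && negb (q j)) l.
Proof. induction l; simpl; [lia|]. destruct (p a), (q a); cbn [andb negb]; lia. Qed.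

Lemma cntp_change1 p q l a : NoDup l -> In a l -> (forall j, j <> a -> p j = q j) ->
  cntp q l = cntp p l + (if q a then 1 else 0) - (if p a then 1 else 0).
Proof.
  induction l as [|h l IH]; intros Hnd Hin Hpq; [destruct Hin|].
  inversion Hnd as [|? ? Hnot Hnd']; subst. simpl.
  destruct Hin as [->|Hin].
  - rewrite (cntp_ext q p l); [lia|].
    intros j Hj. symmetry. apply Hpq. intros ->. contradiction.
  - assert (h <> a) by (intros ->; contradiction).
    rewrite (Hpq h) by auto. rewrite IH by auto. lia.
Qed.

Lemma cntp_ex p l : 0 < cntp p l -> exists j, In j l /\ p j = true.
Proof.
  induction l; simpl; intros H; [lia|].
  destruct (p a) eqn:E; [exists a; auto|].
  destruct IHl as [j [? ?]]; [lia|]. exists j; auto.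
Qed.

Lemma cntp_ex2 p l : NoDup l -> 1 < cntp p l ->
  exists j1 j2, j1 <> j2 /\ In j1 l /\ In j2 l /\ p j1 = true /\ p j2 = true.
Proof.
  induction l as [|h l IH]; simpl; intros Hnd H; [lia|].
  inversion Hnd as [|? ? Hnot Hnd']; subst.
  destruct (p h) eqn:E.
  - destruct (cntp_ex p l) as [j [? ?]]; [lia|].
    exists h, j; repeat split; auto. intros ->; contradiction.
  - destruct (IH Hnd') as [j1 [j2 [? [? [? [? ?]]]]]]; [lia|].
    exists j1, j2; repeat split; auto.
Qed.

Lemma cntp_one p l a : NoDup l -> In a l -> p a = true -> 1 <= cntp p l.
Proof.
  intros Hnd Hin Hp.
  pose proof (cntp_change1 (fun j => if Z.eq_dec j a then false else p j) p l a Hnd Hin).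
  rewrite H. 2:{ intros j Hj. destruct (Z.eq_dec j a); congruence. }
  destruct (Z.eq_dec a a); [|congruence]. rewrite Hp.
  pose proof (cntp_nonneg (fun j => if Z.eq_dec j a then false else p j) l). lia.
Qed.

Lemma cntp_two p l a b : NoDup l -> In a l -> In b l -> a <> b -> p a = true -> p b = true ->
  2 <= cntp p l.
Proof.
  intros Hnd Ha Hb Hab Hpa Hpb.
  pose proof (cntp_change1 (fun j => if Z.eq_dec j a then false else p j) p l a Hnd Ha).
  rewrite H. 2:{ intros j Hj. destruct (Z.eq_dec j a); congruence. }
  destruct (Z.eq_dec a a); [|congruence]. rewrite Hpa.
  pose proof (cntp_one (fun j => if Z.eq_dec j a then false else p j) l b Hnd Hb).
  assert (Hb' : (if Z.eq_dec b a then false else p b) = true) by (destruct (Z.eq_dec b a); congruence).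
  specialize (H0 Hb'). lia.
Qed.

Lemma cntp_three p l a b c : NoDup l -> In a l -> In b l -> In c l -> a <> b -> a <> c -> b <> c ->
  p a = true -> p b = true -> p c = true -> 3 <= cntp p l.
Proof.
  intros Hnd Ha Hb Hc Hab Hac Hbc Hpa Hpb Hpc.
  pose proof (cntp_change1 (fun j => if Z.eq_dec j a then false else p j) p l a Hnd Ha).
  rewrite H. 2:{ intros j Hj. destruct (Z.eq_dec j a); congruence. }
  destruct (Z.eq_dec a a); [|congruence]. rewrite Hpa.
  pose proof (cntp_two (fun j => if Z.eq_dec j a then false else p j) l b c Hnd Hb Hc Hbc).
  assert (Hb' : (if Z.eq_dec b a then false else p b) = true) by (destruct (Z.eq_dec b a); congruence).
  assert (Hc' : (if Z.eq_dec c a then false else p c) = true) by (destruct (Z.eq_dec c a); congruence).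
  specialize (H0 Hb' Hc'). lia.
Qed.

Lemma cnt_fire (q : Z -> Z -> bool) (c : config) a b l :
  NoDup l -> In a l -> In b l -> a <> b ->
  cntp (fun j => q j (fire c (a,b) j)) l =
  cntp (fun j => q j (c j)) l
  + (if q a (c a - 1) then 1 else 0) - (if q a (c a) then 1 else 0)
  + (if q b (c b + 1) then 1 else 0) - (if q b (c b) then 1 else 0).
Proof.
  intros Hnd Ha Hb Hab.
  set (c1 := fun j => if Z.eq_dec j a then c a - 1 else c j).
  rewrite (cntp_change1 (fun j => q j (c1 j)) (fun j => q j (fire c (a,b) j)) l b Hnd Hb).
  2:{ intros j Hj. unfold c1, fire; simpl. destruct (Z.eq_dec j a); auto.
      destruct (Z.eq_dec j b); congruence. }
  rewrite (cntp_change1 (fun j => q j (c j)) (fun j => q j (c1 j)) l a Hnd Ha).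
  2:{ intros j Hj. unfold c1. destruct (Z.eq_dec j a); congruence. }
  unfold c1, fire; simpl.
  destruct (Z.eq_dec a a); [|congruence]. destruct (Z.eq_dec b a); [congruence|].
  destruct (Z.eq_dec b b); [|congruence]. lia.
Qed.

Definition labs (m : Z) : list Z :=
  map (fun i => Z.of_nat i - m) (seq 0 (Z.to_nat m)) ++
  map (fun i => Z.of_nat i + 1) (seq 0 (Z.to_nat m)).

Lemma labs_in m j : 0 <= m -> (In j (labs m) <-> is_label m j).
Proof.
  intros Hm. unfold labs, is_label. rewrite in_app_iff, !in_map_iff. split.
  - intros [[i [<- Hi]]|[i [<- Hi]]]; apply in_seq in Hi; lia.
  - intros [H1 H2]. destruct (Z_lt_le_dec j 0).
    + left. exists (Z.to_nat (j + m)). split; [lia|]. apply in_seq. lia.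
    + right. exists (Z.to_nat (j - 1)). split; [lia|]. apply in_seq. lia.
Qed.

Lemma labs_nodup m : NoDup (labs m).
Proof.
  unfold labs. apply NoDup_app.
  - apply NoDup_map_NoDup_ForallPairs; [|apply seq_NoDup].
    intros x y _ _ H. lia.
  - apply NoDup_map_NoDup_ForallPairs; [|apply seq_NoDup].
    intros x y _ _ H. lia.
  - intros a Ha Hb. apply in_map_iff in Ha, Hb.
    destruct Ha as [i [<- Hi]]. destruct Hb as [k [Hk Hk']].
    apply in_seq in Hi. apply in_seq in Hk'. lia.
Qed.

Lemma cntp_true l : cntp (fun _ => true) l = Z.of_nat (length l).
Proof. induction l; simpl length; [reflexivity|]. cbn [cntp]. rewrite IHl. lia. Qed.

Lemma labs_total m : 0 <= m -> cntp (fun _ => true) (labs m) = 2*m.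
Proof.
  intros Hm. rewrite cntp_true. unfold labs. rewrite length_app, !length_map, !length_seq. lia.
Qed.

Lemma cntp_false l : cntp (fun _ => false) l = 0.
Proof. induction l; cbn [cntp]; lia. Qed.

Lemma labs_A m y : 0 <= y <= m -> cntp (fun j => j <=? -y-1) (labs m) = m - y.
Proof.
  intros Hy. unfold labs. rewrite cntp_app.
  assert (H2 : cntp (fun j => j <=? -y-1) (map (fun i => Z.of_nat i + 1) (seq 0 (Z.to_nat m))) = 0).
  { rewrite (cntp_ext _ (fun _ => false)); [apply cntp_false|].
    intros j Hj. apply in_map_iff in Hj. destruct Hj as [i [<- _]].
    apply Z.leb_gt. lia. }
  rewrite H2.
  assert (H1 : forall N, cntp (fun j => j <=? -y-1) (map (fun i => Z.of_nat i - m) (seq 0 N))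
                 = Z.min (Z.of_nat N) (m - y)).
  { induction N. - simpl. lia.
    - rewrite seq_S, map_app, cntp_app, IHN. cbn [map cntp].
      destruct (Z.leb_spec (Z.of_nat (0 + N) - m) (-y-1)); lia. }
  rewrite H1. lia.
Qed.

Definition cs (m : Z) (mvs : list (Z*Z)) (t : nat) (v : Z) : Z :=
  cntp (fun j => config_at mvs t j =? v) (labs m).

Definition init0 (m v : Z) : Z := if v =? 0 then 2*m else 0.

Lemma legal_facts m mvs t : valid_run m mvs -> (t < length mvs)%nat ->
  let a := fst (nth t mvs (0,0)) in let b := snd (nth t mvs (0,0)) in
  is_label m a /\ is_label m b /\ a < b /\
  config_at mvs t a = site mvs t /\ config_at mvs t b = site mvs t.
Proof.
  intros Hv Ht. destruct (Hv t Ht) as [? [? [? ?]]]. unfold site. cbv zeta. split; [auto|]. split; [auto|]. split; [auto|]. split; [reflexivity|symmetry; auto].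
Qed.

Lemma cs_F m mvs t : 1 <= m -> valid_run m mvs -> (t <= length mvs)%nat -> forall v,
  cs m mvs t v = init0 m v + Fc mvs (v-1) t + Fc mvs (v+1) t - 2 * Fc mvs v t.
Proof.
  intros Hm Hv. induction t as [|t IH]; intros Ht v.
  - unfold cs, init0. rewrite !Fc_0.
    destruct (Z.eqb_spec v 0).
    + subst. transitivity (cntp (fun _ => true) (labs m));
        [apply cntp_ext; intros; reflexivity | rewrite labs_total; lia].
    + transitivity (cntp (fun _ => false) (labs m));
        [apply cntp_ext; intros; unfold config_at; change (init_config j) with 0; apply Z.eqb_neq; auto
        | rewrite cntp_false; lia].
  - destruct (legal_facts m mvs t Hv ltac:(lia)) as [Ha [Hb [Hab [Hca Hcb]]]].
    unfold cs. rewrite config_S by lia.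
    destruct (nth t mvs (0,0)) as [a b] eqn:E. cbn [fst snd] in *.
    rewrite (cnt_fire (fun _ z => z =? v)).
    2: apply labs_nodup. 2,3: apply labs_in; auto; lia. 2: lia.
    fold (cs m mvs t v). rewrite IH by lia. rewrite !Fc_S. rewrite Hca, Hcb.
    destruct (Z.eqb_spec (site mvs t - 1) v), (Z.eqb_spec (site mvs t) v),
      (Z.eqb_spec (site mvs t + 1) v), (Z.eqb_spec (site mvs t) (v-1)),
      (Z.eqb_spec (site mvs t) (v+1)); lia.
Qed.

Lemma cs_fire_ge2 m mvs t : 1 <= m -> valid_run m mvs -> (t < length mvs)%nat ->
  2 <= cs m mvs t (site mvs t).
Proof.
  intros Hm Hv Ht. destruct (legal_facts m mvs t Hv Ht) as [Ha [Hb [Hab [Hca Hcb]]]].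
  unfold cs. apply (cntp_two _ _ (fst (nth t mvs (0,0))) (snd (nth t mvs (0,0)))).
  - apply labs_nodup.
  - apply labs_in; auto; lia.
  - apply labs_in; auto; lia.
  - lia.
  - apply Z.eqb_eq; auto.
  - apply Z.eqb_eq; auto.
Qed.

(* ---------- the odometer g ---------- *)
Fixpoint tri (k : nat) : Z := match k with O => 0 | S k' => tri k' + Z.of_nat (S k') end.
Definition g (m u : Z) : Z := tri (Z.to_nat (m - Z.abs u)).
Definition cstar (m u : Z) : Z := if (1 <=? Z.abs u) && (Z.abs u <=? m) then 1 else 0.

Lemma tri_succ z : tri (Z.to_nat (z+1)) = tri (Z.to_nat z) + Z.max 0 (z+1).
Proof.
  destruct (Z_lt_le_dec z 0).
  - replace (Z.to_nat (z+1)) with 0%nat by lia. replace (Z.to_nat z) with 0%nat by lia.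
    simpl. lia.
  - replace (Z.to_nat (z+1)) with (S (Z.to_nat z)) by lia. simpl tri. lia.
Qed.

Lemma tri_nonneg k : 0 <= tri k.
Proof. induction k; simpl; lia. Qed.

Lemma tri_ge z : z <= tri (Z.to_nat z).
Proof.
  destruct (Z_lt_le_dec z 0). { pose proof (tri_nonneg (Z.to_nat z)); lia. }
  replace z with (Z.of_nat (Z.to_nat z)) at 1 by lia.
  induction (Z.to_nat z) as [|k IH]; simpl; [lia|]. pose proof (tri_nonneg k). lia.
Qed.

Lemma g_lap m u : 1 <= m ->
  init0 m u + g m (u-1) + g m (u+1) - 2 * g m u = cstar m u.
Proof.
  intros Hm. unfold g, init0, cstar.
  destruct (Z.lt_trichotomy u 0) as [Hu|[Hu|Hu]].
  - replace (Z.abs (u-1)) with (-u+1) by lia. replace (Z.abs (u+1)) with (-u-1) by lia.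
    replace (Z.abs u) with (-u) by lia.
    remember (m - (-u+1)) as z eqn:Hz.
    replace (m - (-u-1)) with (z+1+1) by lia. replace (m - - u) with (z+1) by lia.
    rewrite !tri_succ. destruct (Z.eqb_spec u 0); [lia|].
    destruct (Z.leb_spec 1 (-u)), (Z.leb_spec (-u) m); cbn [andb]; lia.
  - subst. simpl (Z.abs 0). replace (Z.abs (0-1)) with 1 by reflexivity.
    replace (Z.abs (0+1)) with 1 by reflexivity.
    replace (m - 0) with ((m - 1) + 1) by lia. rewrite tri_succ. change (0 =? 0) with true. change (1 <=? 0) with false. cbn [andb]. lia.
  - replace (Z.abs (u-1)) with (u-1) by lia. replace (Z.abs (u+1)) with (u+1) by lia.
    replace (Z.abs u) with u by lia.
    remember (m - (u+1)) as z eqn:Hz.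
    replace (m - (u-1)) with (z+1+1) by lia. replace (m - u) with (z+1) by lia.
    rewrite !tri_succ. destruct (Z.eqb_spec u 0); [lia|].
    destruct (Z.leb_spec 1 u), (Z.leb_spec u m); cbn [andb]; lia.
Qed.

(* least action *)
Lemma least_action m mvs : 1 <= m -> valid_run m mvs ->
  forall t, (t <= length mvs)%nat -> forall u, Fc mvs u t <= g m u.
Proof.
  intros Hm Hv. induction t as [|t IH]; intros Ht u.
  - rewrite Fc_0. unfold g. apply tri_nonneg.
  - rewrite Fc_S. destruct (Z.eqb_spec (site mvs t) u) as [E|E]; [|pose proof (IH ltac:(lia) u); lia].
    pose proof (IH ltac:(lia) u) as H0.
    destruct (Z.eq_dec (Fc mvs u t) (g m u)) as [Eq|Ne]; [|lia].
    exfalso. pose proof (cs_fire_ge2 m mvs t Hm Hv ltac:(lia)) as H2. rewrite E in H2.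
    rewrite (cs_F m mvs t Hm Hv ltac:(lia)) in H2.
    pose proof (g_lap m u Hm).
    pose proof (IH ltac:(lia) (u-1)). pose proof (IH ltac:(lia) (u+1)).
    unfold cstar in H. destruct (_ && _); lia.
Qed.

Lemma Zind_up (P : Z -> Prop) a b : P a -> (forall u, a <= u < b -> P u -> P (u+1)) ->
  forall u, a <= u <= b -> P u.
Proof.
  intros H0 HS u Hu.
  replace u with (a + Z.of_nat (Z.to_nat (u - a))) by lia.
  assert (Z.of_nat (Z.to_nat (u - a)) <= b - a) by lia. clear Hu.
  induction (Z.to_nat (u - a)) as [|k IH].
  - simpl. replace (a + 0) with a by lia. auto.
  - replace (a + Z.of_nat (S k)) with ((a + Z.of_nat k) + 1) by lia.
    apply HS; [lia|]. apply IH. lia.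
Qed.

Lemma Zind_down (P : Z -> Prop) a b : P b -> (forall u, a < u <= b -> P u -> P (u-1)) ->
  forall u, a <= u <= b -> P u.
Proof.
  intros H0 HS u Hu.
  replace u with (b - Z.of_nat (Z.to_nat (b - u))) by lia.
  assert (Z.of_nat (Z.to_nat (b - u)) <= b - a) by lia. clear Hu.
  induction (Z.to_nat (b - u)) as [|k IH].
  - simpl. replace (b - 0) with b by lia. auto.
  - replace (b - Z.of_nat (S k)) with ((b - Z.of_nat k) - 1) by lia.
    apply HS; [lia|]. apply IH. lia.
Qed.

Lemma discrete (m : Z) (D : Z -> Z) : 1 <= m ->
  (forall u, 0 <= D u) -> (forall u, m <= Z.abs u -> D u = 0) ->
  (forall u, 1 <= Z.abs u <= m -> 0 <= D (u-1) + D (u+1) - 2 * D u) ->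
  -1 <= D (-1) + D 1 - 2 * D 0 -> forall u, D u = 0.
Proof.
  intros Hm Hpos Hout Hconv H0.
  set (e := fun u => D (u+1) - D u).
  assert (ER : forall u, 0 <= u <= m -> e u <= 0).
  { apply (Zind_down (fun u => e u <= 0)).
    - unfold e. rewrite (Hout m), (Hout (m+1)); lia.
    - intros u Hu IH. unfold e in *. pose proof (Hconv u ltac:(lia)).
      replace (u - 1 + 1) with u by lia. lia. }
  assert (EL : forall u, -m-1 <= u <= -1 -> 0 <= e u).
  { apply (Zind_up (fun u => 0 <= e u)).
    - unfold e. rewrite (Hout (-m-1+1)), (Hout (-m-1)); lia.
    - intros u Hu IH. unfold e in *. pose proof (Hconv (u+1) ltac:(lia)).
      replace (u + 1 - 1) with u in H by lia. lia. }
  assert (HD0 : D 0 = 0).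
  { pose proof (ER 0 ltac:(lia)) as E0. pose proof (EL (-1) ltac:(lia)) as E1.
    unfold e in E0, E1. simpl in E0, E1.
    destruct (Z.eq_dec (D 1) (D 0)) as [Eq|Ne].
    -
      assert (EZ : forall u, 0 <= u <= m -> e u = 0).
      { apply (Zind_up (fun u => e u = 0)).
        - unfold e. simpl. lia.
        - intros u Hu IH. pose proof (ER (u+1) ltac:(lia)) as A1.
          pose proof (Hconv (u+1) ltac:(lia)) as A2. unfold e in *.
          assert (R : u + 1 - 1 = u) by lia. rewrite R in *. lia. }
      assert (DC : forall u, 0 <= u <= m -> D u = D 0).
      { apply (Zind_up (fun u => D u = D 0)); [reflexivity|].
        intros u Hu IH. pose proof (EZ u ltac:(lia)). unfold e in H. lia. }
      rewrite <- (DC m ltac:(lia)). apply Hout. lia.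
    - assert (D (-1 + 1) - D (-1) = 0) by (simpl; lia).
      assert (EZ : forall u, -m-1 <= u <= -1 -> e u = 0).
      { apply (Zind_down (fun u => e u = 0)).
        - unfold e. auto.
        - intros u Hu IH. pose proof (EL (u-1) ltac:(lia)) as A1.
          pose proof (Hconv u ltac:(lia)) as A2. unfold e in *.
          assert (R : u - 1 + 1 = u) by lia. rewrite R in *. lia. }
      assert (DC : forall u, -m <= u <= 0 -> D u = D 0).
      { apply (Zind_down (fun u => D u = D 0)); [reflexivity|].
        intros u Hu IH. pose proof (EZ (u-1) ltac:(lia)) as A1. unfold e in A1.
        assert (R : u - 1 + 1 = u) by lia. rewrite R in A1. lia. }
      rewrite <- (DC (-m) ltac:(lia)). apply Hout. lia. }
  assert (RR : forall u, 0 <= u <= m -> D u <= D 0).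
  { apply (Zind_up (fun u => D u <= D 0)); [lia|].
    intros u Hu IH. pose proof (ER u ltac:(lia)). unfold e in H. lia. }
  assert (LL : forall u, -m <= u <= 0 -> D u <= D 0).
  { apply (Zind_down (fun u => D u <= D 0)); [lia|].
    intros u Hu IH. pose proof (EL (u-1) ltac:(lia)) as A1. unfold e in A1.
    assert (R : u - 1 + 1 = u) by lia. rewrite R in A1. lia. }
  intros u. pose proof (Hpos u).
  destruct (Z_le_dec m (Z.abs u)); [apply Hout; auto|].
  destruct (Z_le_dec 0 u).
  - pose proof (RR u ltac:(lia)). lia.
  - pose proof (LL u ltac:(lia)). lia.
Qed.

Lemma stable_cs m mvs : 1 <= m -> complete_run m mvs -> forall v, cs m mvs (length mvs) v <= 1.
Proof.
  intros Hm [Hv Hs] v. unfold cs.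
  destruct (Z_le_gt_dec (cntp (fun j => config_at mvs (length mvs) j =? v) (labs m)) 1); auto.
  destruct (cntp_ex2 (fun j => config_at mvs (length mvs) j =? v) (labs m) (labs_nodup m) ltac:(lia)) as [j1 [j2 [Hne [H1 [H2 [E1 E2]]]]]].
  apply labs_in in H1; [|lia]. apply labs_in in H2; [|lia].
  apply Z.eqb_eq in E1, E2. exfalso. apply (Hs j1 j2 H1 H2 Hne). congruence.
Qed.

Lemma Fn_g m mvs : 1 <= m -> complete_run m mvs -> forall u, Fc mvs u (length mvs) = g m u.
Proof.
  intros Hm Hc. pose proof Hc as [Hv Hs].
  set (D := fun u => g m u - Fc mvs u (length mvs)).
  assert (HD : forall u, D u = 0).
  { apply (discrete m D Hm).
    - intros u. unfold D. pose proof (least_action m mvs Hm Hv (length mvs) (le_n _) u). lia.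
    - intros u Hu. unfold D. pose proof (least_action m mvs Hm Hv (length mvs) (le_n _) u).
      pose proof (Fc_nonneg mvs u (length mvs)).
      unfold g in *. replace (Z.to_nat (m - Z.abs u)) with 0%nat in * by lia. simpl in *. lia.
    - intros u Hu. unfold D.
      pose proof (g_lap m u Hm). pose proof (cs_F m mvs (length mvs) Hm Hv (le_n _) u).
      pose proof (stable_cs m mvs Hm Hc u). unfold cstar in H.
      destruct (Z.leb_spec 1 (Z.abs u)), (Z.leb_spec (Z.abs u) m); cbn [andb] in H; try lia.
    - unfold D.
      pose proof (g_lap m 0 Hm). pose proof (cs_F m mvs (length mvs) Hm Hv (le_n _) 0).
      pose proof (stable_cs m mvs Hm Hc 0). pose proof (cntp_nonneg (fun j => config_at mvs (length mvs) j =? 0) (labs m)).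
      fold (cs m mvs (length mvs) 0) in H2.
      replace (cstar m 0) with 0 in H by reflexivity. simpl (0-1) in *. simpl (0+1) in *. lia. }
  intros u. specialize (HD u). unfold D in HD. lia.
Qed.

Definition aa (m : Z) (mvs : list (Z*Z)) (t : nat) (u : Z) : Z := g m u - Fc mvs u t.

Lemma aa_nonneg m mvs t u : 1 <= m -> complete_run m mvs -> (t <= length mvs)%nat -> 0 <= aa m mvs t u.
Proof.
  intros Hm Hc Ht. unfold aa. rewrite <- (Fn_g m mvs Hm Hc u). pose proof (Fc_mono mvs u _ _ Ht). lia.
Qed.

Lemma aa_S m mvs t u : aa m mvs (S t) u = aa m mvs t u - (if Z.eqb (site mvs t) u then 1 else 0).
Proof. unfold aa. rewrite Fc_S. lia. Qed.

Lemma cs_aa m mvs t u : 1 <= m -> complete_run m mvs -> (t <= length mvs)%nat ->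
  cs m mvs t u = cstar m u + 2 * aa m mvs t u - aa m mvs t (u-1) - aa m mvs t (u+1).
Proof.
  intros Hm [Hv Hs] Ht. rewrite (cs_F m mvs t Hm Hv Ht). pose proof (g_lap m u Hm). unfold aa. lia.
Qed.

Lemma aa_fire_pos m mvs t : 1 <= m -> complete_run m mvs -> (t < length mvs)%nat ->
  1 <= aa m mvs t (site mvs t).
Proof.
  intros Hm Hc Ht. pose proof (aa_nonneg m mvs (S t) (site mvs t) Hm Hc Ht).
  rewrite aa_S, Z.eqb_refl in H. lia.
Qed.

Definition Winv (m : Z) (a : Z -> Z) : Prop :=
  (forall s, 1 <= s -> a (s-1) >= Z.min (a s) (m - s) /\ a (s+1) >= Z.min (a s) (m - s) - 1) /\
  (forall s, s <= -1 -> a (s+1) >= Z.min (a s) (m + s) /\ a (s-1) >= Z.min (a s) (m + s) - 1) /\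
  (forall s, s = 0 -> a (s+1) >= Z.min (a s) m - 1 /\ a (s-1) >= Z.min (a s) m - 1).

Ltac wfin Ha :=
  rewrite ?Z.add_simpl_r, ?Z.sub_add in *; rewrite !Ha;
  repeat match goal with |- context [Z.eq_dec ?x ?y] => destruct (Z.eq_dec x y) end; lia.

Lemma Winv_step m (a a' : Z -> Z) u :
  Winv m a -> (forall v, a' v = if Z.eq_dec v u then a v - 1 else a v) ->
  (if Z.eq_dec u 0 then 0 else 1) + 2 * a u - a (u-1) - a (u+1) >= 2 ->
  Winv m a'.
Proof.
  intros [W1 [W2 W3]] Ha Hf.
  assert (Hf' : (u = 0 /\ 2 * a u - a (u-1) - a (u+1) >= 2) \/
                (u <> 0 /\ 1 + 2 * a u - a (u-1) - a (u+1) >= 2))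
    by (destruct (Z.eq_dec u 0); auto). clear Hf.
  assert (Fu : (1 <= u /\ a (u-1) >= Z.min (a u) (m - u) /\ a (u+1) >= Z.min (a u) (m - u) - 1) \/
               (u <= -1 /\ a (u+1) >= Z.min (a u) (m + u) /\ a (u-1) >= Z.min (a u) (m + u) - 1) \/
               (u = 0 /\ a (u+1) >= Z.min (a u) m - 1 /\ a (u-1) >= Z.min (a u) m - 1)).
  { destruct (Z.lt_trichotomy u 0) as [Hu|[Hu|Hu]].
    - right; left. split; [lia|]. apply W2; lia.
    - right; right. split; [lia|]. apply W3; lia.
    - left. split; [lia|]. apply W1; lia. }
  split; [|split].
  - intros s Hs. destruct (W1 s Hs) as [A1 A2].
    destruct (Z.eq_dec s (u+1)) as [->|N1]; [wfin Ha|].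
    destruct (Z.eq_dec s u) as [->|N2]; [wfin Ha|].
    destruct (Z.eq_dec s (u-1)) as [->|N3]; [wfin Ha|].
    wfin Ha.
  - intros s Hs. destruct (W2 s Hs) as [A1 A2].
    destruct (Z.eq_dec s (u+1)) as [->|N1]; [wfin Ha|].
    destruct (Z.eq_dec s u) as [->|N2]; [wfin Ha|].
    destruct (Z.eq_dec s (u-1)) as [->|N3]; [wfin Ha|].
    wfin Ha.
  - intros s Hs. destruct (W3 s Hs) as [A1 A2].
    destruct (Z.eq_dec s (u+1)) as [->|N1]; [wfin Ha|].
    destruct (Z.eq_dec s u) as [->|N2]; [wfin Ha|].
    destruct (Z.eq_dec s (u-1)) as [->|N3]; [wfin Ha|].
    wfin Ha.
Qed.


Lemma Winv_g m : 1 <= m -> Winv m (g m).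
Proof.
  intros Hm. unfold g.
  assert (Hmono : forall z, tri (Z.to_nat z) <= tri (Z.to_nat (z+1))).
  { intros z. rewrite tri_succ. lia. }
  split; [|split].
  - intros s Hs. replace (Z.abs (s-1)) with (s-1) by lia.
    replace (Z.abs s) with s by lia. replace (Z.abs (s+1)) with (s+1) by lia.
    replace (m - (s - 1)) with ((m - s) + 1) by lia.
    pose proof (Hmono (m - s)). pose proof (tri_ge (m - (s+1))). lia.
  - intros s Hs. replace (Z.abs (s+1)) with (-s-1) by lia.
    replace (Z.abs s) with (-s) by lia. replace (Z.abs (s-1)) with (-s+1) by lia.
    replace (m - (-s-1)) with ((m + s) + 1) by lia. replace (m - - s) with (m + s) by lia.
    pose proof (Hmono (m + s)). pose proof (tri_ge (m - (-s+1))). lia.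
  - intros s ->. simpl (0+1). simpl (0-1). replace (Z.abs 1) with 1 by reflexivity.
    replace (Z.abs (-1)) with 1 by reflexivity. replace (Z.abs 0) with 0 by reflexivity.
    pose proof (tri_ge (m-1)). lia.
Qed.

Lemma g_pos_range m u : 1 <= g m u -> Z.abs u < m.
Proof.
  unfold g. intros H. destruct (Z_lt_le_dec (Z.abs u) m); auto.
  replace (Z.to_nat (m - Z.abs u)) with 0%nat in H by lia. simpl in H. lia.
Qed.

Lemma cstar_val m u : Z.abs u < m -> cstar m u = if Z.eq_dec u 0 then 0 else 1.
Proof.
  intros H. unfold cstar. destruct (Z.eq_dec u 0).
  - subst. reflexivity.
  - destruct (Z.leb_spec 1 (Z.abs u)), (Z.leb_spec (Z.abs u) m); cbn [andb]; lia.
Qed.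

Lemma Winv_ext m (a b : Z -> Z) : (forall v, a v = b v) -> Winv m a -> Winv m b.
Proof.
  intros E [W1 [W2 W3]]. split; [|split]; intros s Hs; rewrite <- !E;
    [apply W1|apply W2|apply W3]; auto.
Qed.

Lemma Winv_run m mvs : 1 <= m -> complete_run m mvs ->
  forall t, (t <= length mvs)%nat -> Winv m (aa m mvs t).
Proof.
  intros Hm Hc. pose proof Hc as [Hv Hs]. induction t as [|t IH]; intros Ht.
  - apply (Winv_ext m (g m)); [|apply Winv_g; auto].
    intros v. unfold aa. rewrite Fc_0. lia.
  - apply (Winv_step m (aa m mvs t) _ (site mvs t)); [apply IH; lia| |].
    + intros v. rewrite aa_S. destruct (Z.eqb_spec (site mvs t) v), (Z.eq_dec v (site mvs t)); lia.
    + pose proof (cs_fire_ge2 m mvs t Hm Hv ltac:(lia)).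
      rewrite (cs_aa m mvs t _ Hm Hc ltac:(lia)) in H.
      pose proof (aa_fire_pos m mvs t Hm Hc ltac:(lia)).
      assert (1 <= g m (site mvs t)).
      { unfold aa in H0. pose proof (Fc_nonneg mvs (site mvs t) t). lia. }
      rewrite (cstar_val m _ (g_pos_range m _ H1)) in H. lia.
Qed.

Lemma late_fire m mvs t : 1 <= m -> complete_run m mvs -> (t < length mvs)%nat ->
  let u := site mvs t in let a := aa m mvs t in
  a u <= m - Z.abs u ->
  cs m mvs t u = 2 /\
  (1 <= u -> a (u-1) = a u /\ a (u+1) = a u - 1) /\
  (u <= -1 -> a (u+1) = a u /\ a (u-1) = a u - 1) /\
  (u = 0 -> a (u+1) = a u - 1 /\ a (u-1) = a u - 1).
Proof.
  intros Hm Hc Ht u a Hl. unfold a, u in *. clear a u. pose proof Hc as [Hv Hs].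
  destruct (Winv_run m mvs Hm Hc t ltac:(lia)) as [W1 [W2 W3]].
  pose proof (cs_fire_ge2 m mvs t Hm Hv Ht) as C2.
  rewrite (cs_aa m mvs t _ Hm Hc ltac:(lia)) in *.
  pose proof (aa_fire_pos m mvs t Hm Hc Ht) as P1.
  set (u := site mvs t) in *.
  assert (Hu : Z.abs u < m) by lia.
  rewrite (cstar_val m _ Hu) in *.
  destruct (Z.lt_trichotomy u 0) as [H|[H|H]].
  - destruct (W2 u ltac:(lia)). destruct (Z.eq_dec u 0); [lia|].
    split; [lia|]. split; [lia|]. split; [|lia]. intros _. lia.
  - destruct (W3 u H). destruct (Z.eq_dec u 0); [|lia].
    split; [lia|]. split; [lia|]. split; [lia|]. intros _. lia.
  - destruct (W1 u ltac:(lia)). destruct (Z.eq_dec u 0); [lia|].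
    split; [lia|]. split; [|split; lia]. intros _. lia.
Qed.

Lemma move_formulas m mvs x y t : 1 <= m -> complete_run m mvs ->
  0 <= x <= m - 1 -> 0 <= y <= m - 1 -> is_move_xy mvs x y t ->
  site mvs t = x - y /\
  aa m mvs t (x - y) = Z.min x y + 1 /\
  aa m mvs t (x - y + 1) = Z.min (x+1) y /\
  aa m mvs t (x - y - 1) = Z.min x (y+1) /\
  cs m mvs t (x - y) = 2.
Proof.
  intros Hm Hc Hx Hy [Ht [Hsite Hfa]].
  pose proof (fa_eq mvs (x - y) t Ht) as E. rewrite Hfa in E.
  rewrite Fc_S, Hsite, Z.eqb_refl in E. rewrite (Fn_g m mvs Hm Hc) in E.
  assert (A0 : aa m mvs t (x - y) = Z.min x y + 1) by (unfold aa; lia).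
  pose proof (late_fire m mvs t Hm Hc Ht) as L. cbv zeta in L. rewrite Hsite in L.
  destruct (L ltac:(lia)) as [C [L1 [L2 L3]]].
  split; [auto|]. split; [auto|].
  destruct (Z.lt_trichotomy (x - y) 0) as [H|[H|H]].
  - destruct (L2 ltac:(lia)). lia.
  - destruct (L3 H). lia.
  - destruct (L1 ltac:(lia)). lia.
Qed.

Definition mvf (mvs : list (Z*Z)) t := fst (nth t mvs (0,0)).
Definition mvsn (mvs : list (Z*Z)) t := snd (nth t mvs (0,0)).

Lemma pos_step mvs t j : (t < length mvs)%nat ->
  config_at mvs (S t) j =
  if Z.eq_dec j (mvf mvs t) then config_at mvs t j - 1
  else if Z.eq_dec j (mvsn mvs t) then config_at mvs t j + 1
  else config_at mvs t j.
Proof.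
  intros Ht. rewrite config_S by auto. unfold fire, mvf, mvsn.
  destruct (Z.eq_dec j (fst (nth t mvs (0,0)))) as [->|]; auto.
  destruct (Z.eq_dec j (snd (nth t mvs (0,0)))) as [->|]; auto.
Qed.

Lemma legal_at m mvs t : valid_run m mvs -> (t < length mvs)%nat ->
  is_label m (mvf mvs t) /\ is_label m (mvsn mvs t) /\ mvf mvs t < mvsn mvs t /\
  config_at mvs t (mvf mvs t) = site mvs t /\ config_at mvs t (mvsn mvs t) = site mvs t.
Proof. intros Hv Ht. exact (legal_facts m mvs t Hv Ht). Qed.

Lemma stay_le m mvs s j t1 : valid_run m mvs -> forall k,
  (t1 + k <= length mvs)%nat ->
  (forall t', (t1 <= t' < t1 + k)%nat -> site mvs t' <> s) ->
  config_at mvs t1 j <= s -> config_at mvs (t1 + k) j <= s.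
Proof.
  intros Hv k. induction k as [|k IH]; intros Hk Hno H0.
  - rewrite Nat.add_0_r. auto.
  - replace (t1 + S k)%nat with (S (t1 + k)) by lia.
    pose proof (IH ltac:(lia) (fun t' Ht' => Hno t' ltac:(lia)) H0) as IH'.
    pose proof (Hno (t1 + k)%nat ltac:(lia)) as Hs.
    destruct (legal_at m mvs (t1+k) Hv ltac:(lia)) as [_ [_ [Hab [Ha Hb]]]].
    rewrite pos_step by lia.
    destruct (Z.eq_dec j (mvf mvs (t1+k))); [lia|].
    destruct (Z.eq_dec j (mvsn mvs (t1+k))) as [->|]; [|lia].
    rewrite Hb in *. lia.
Qed.

Lemma arrive mvs s j t1 : forall k,
  config_at mvs t1 j <> s -> config_at mvs (t1 + k) j = s ->
  exists t', (t1 <= t' < t1 + k)%nat /\ config_at mvs t' j <> s /\ config_at mvs (S t') j = s.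
Proof.
  induction k as [|k IH]; intros H1 H2.
  - rewrite Nat.add_0_r in H2. contradiction.
  - replace (t1 + S k)%nat with (S (t1 + k)) in H2 by lia.
    destruct (Z.eq_dec (config_at mvs (t1 + k) j) s) as [E|E].
    + destruct (IH H1 E) as [t' [? [? ?]]]. exists t'. split; [lia|]. auto.
    + exists (t1 + k)%nat. split; [lia|]. auto.
Qed.

Lemma moved_to m mvs t j s : valid_run m mvs -> (t < length mvs)%nat ->
  config_at mvs t j <> s -> config_at mvs (S t) j = s ->
  (j = mvf mvs t /\ site mvs t = s + 1) \/ (j = mvsn mvs t /\ site mvs t = s - 1).
Proof.
  intros Hv Ht H1 H2. destruct (legal_at m mvs t Hv Ht) as [_ [_ [Hab [Ha Hb]]]].
  rewrite pos_step in H2 by auto.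
  destruct (Z.eq_dec j (mvf mvs t)) as [->|].
  - left. split; auto. lia.
  - destruct (Z.eq_dec j (mvsn mvs t)) as [->|].
    + right. split; auto. lia.
    + contradiction.
Qed.

Lemma only_two m mvs t j : 1 <= m -> valid_run m mvs -> (t < length mvs)%nat ->
  cs m mvs t (site mvs t) = 2 -> is_label m j -> config_at mvs t j = site mvs t ->
  j = mvf mvs t \/ j = mvsn mvs t.
Proof.
  intros Hm Hv Ht Hc Hj Hp. destruct (legal_at m mvs t Hv Ht) as [La [Lb [Hab [Ha Hb]]]].
  destruct (Z.eq_dec j (mvf mvs t)); auto. destruct (Z.eq_dec j (mvsn mvs t)); auto.
  exfalso. unfold cs in Hc.
  assert (3 <= cntp (fun j0 => config_at mvs t j0 =? site mvs t) (labs m)).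
  { apply (cntp_three _ _ (mvf mvs t) (mvsn mvs t) j (labs_nodup m));
      try (apply labs_in; auto; lia); try lia; apply Z.eqb_eq; auto. }
  lia.
Qed.

Lemma move_uniq mvs x y t1 t2 : is_move_xy mvs x y t1 -> is_move_xy mvs x y t2 -> t1 = t2.
Proof.
  intros [H1 [S1 F1]] [H2 [S2 F2]].
  pose proof (fa_eq mvs (x-y) _ H1) as E1. pose proof (fa_eq mvs (x-y) _ H2) as E2.
  rewrite F1 in E1. rewrite F2 in E2. rewrite Fc_S, S1, Z.eqb_refl in E1.
  rewrite Fc_S, S2, Z.eqb_refl in E2.
  apply (Fc_uniq mvs (x - y)); auto. lia.
Qed.

Lemma move_exists m mvs x y : 1 <= m -> complete_run m mvs ->
  0 <= x <= m - 1 -> 0 <= y <= m - 1 -> exists t, is_move_xy mvs x y t.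
Proof.
  intros Hm Hc Hx Hy.
  assert (G : Z.min x y + 1 <= g m (x - y)).
  { unfold g. pose proof (tri_ge (m - Z.abs (x - y))). lia. }
  rewrite <- (Fn_g m mvs Hm Hc) in G.
  destruct (Fc_attain mvs (x - y) (length mvs) (Fc mvs (x-y) (length mvs) - Z.min x y - 1))
    as [t [Ht [Hs Hf]]]; [lia|].
  exists t. split; [auto|]. split; [auto|].
  pose proof (fa_eq mvs (x - y) t Ht). rewrite Fc_S, Hs, Z.eqb_refl in H. lia.
Qed.

Definition NA m mvs y t v := cntp (fun j => (j <=? -y-1) && (v <=? config_at mvs t j)) (labs m).

Lemma NA_total m mvs y t v : 0 <= y <= m -> NA m mvs y t v <= m - y.
Proof.
  intros Hy. unfold NA. rewrite <- (labs_A m y Hy). apply cntp_le.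
  intros j _ H. apply andb_true_iff in H. tauto.
Qed.

Lemma NA_split m mvs y t u : NA m mvs y t u =
  NA m mvs y t (u+1) + cntp (fun j => (j <=? -y-1) && (config_at mvs t j =? u)) (labs m).
Proof.
  unfold NA. rewrite (cntp_split _ (fun j => u + 1 <=? config_at mvs t j)). f_equal.
  - apply cntp_ext. intros j _.
    destruct (j <=? -y-1); cbn [andb]; [|reflexivity].
    destruct (Z.leb_spec u (config_at mvs t j)), (Z.leb_spec (u+1) (config_at mvs t j)); auto; lia.
  - apply cntp_ext. intros j _.
    destruct (j <=? -y-1); cbn [andb]; [|reflexivity].
    destruct (Z.leb_spec u (config_at mvs t j)), (Z.leb_spec (u+1) (config_at mvs t j)),
      (Z.eqb_spec (config_at mvs t j) u); cbn [andb negb]; auto; lia.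
Qed.

Lemma NA_inv m mvs y : 1 <= m -> complete_run m mvs -> 0 <= y <= m - 1 ->
  forall t, (t <= length mvs)%nat -> forall v, 0 <= v ->
  NA m mvs y t v = 0 \/ NA m mvs y t v + v <= m - y.
Proof.
  intros Hm Hc Hy. pose proof Hc as [Hv Hs]. induction t as [|t IH]; intros Ht v Hv0.
  - destruct (Z.eq_dec v 0) as [->|Hne].
    + right. pose proof (NA_total m mvs y 0 0 ltac:(lia)). lia.
    + left. unfold NA. transitivity (cntp (fun _ => false) (labs m)); [|apply cntp_false].
      apply cntp_ext. intros j _. unfold config_at. simpl.
      change (init_config j) with 0. destruct (Z.leb_spec v 0); [lia|]. apply andb_false_r.
  - destruct (legal_at m mvs t Hv ltac:(lia)) as [La [Lb [Hab [Ha Hb]]]].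
    set (a := mvf mvs t) in *. set (b := mvsn mvs t) in *. set (u := site mvs t) in *.
    assert (E : NA m mvs y (S t) v =
       NA m mvs y t v
       + (if (a <=? -y-1) && (v <=? u - 1) then 1 else 0) - (if (a <=? -y-1) && (v <=? u) then 1 else 0)
       + (if (b <=? -y-1) && (v <=? u + 1) then 1 else 0) - (if (b <=? -y-1) && (v <=? u) then 1 else 0)).
    { unfold NA. rewrite config_S by lia.
      replace (nth t mvs (0,0)) with (a, b) by (unfold a, b, mvf, mvsn; destruct (nth t mvs (0,0)); reflexivity).
      rewrite (cnt_fire (fun j z => (j <=? -y-1) && (v <=? z))).
      2: apply labs_nodup. 2,3: apply labs_in; auto; lia. 2: lia.
      rewrite Ha, Hb. reflexivity. }
    pose proof (IH ltac:(lia) v Hv0) as IHv.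
    pose proof (NA_total m mvs y t u ltac:(lia)) as Tu.
    pose proof (NA_split m mvs y t u) as Sp.
    pose proof (cntp_nonneg (fun j => (j <=? -y-1) && (config_at mvs t j =? u)) (labs m)) as Cn.
    pose proof (cntp_nonneg (fun j => (j <=? -y-1) && (v <=? config_at mvs (S t) j)) (labs m)) as Nn.
    fold (NA m mvs y (S t) v) in Nn.
    destruct (Z.leb_spec b (-y-1)) as [HbA|HbA].
    + assert (Two : 2 <= cntp (fun j => (j <=? -y-1) && (config_at mvs t j =? u)) (labs m)).
      { apply (cntp_two _ _ a b (labs_nodup m)); try (apply labs_in; auto; lia); try lia;
          apply andb_true_iff; split; try (apply Z.leb_le; lia); apply Z.eqb_eq; auto. }
      assert (HaA : (a <=? -y-1) = true) by (apply Z.leb_le; lia).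
      rewrite HaA in E. cbn [andb] in E.
      destruct (Z.eq_dec v (u+1)) as [->|Hne].
      * destruct (Z.leb_spec (u+1) (u-1)); [lia|]. destruct (Z.leb_spec (u+1) u); [lia|].
        destruct (Z.leb_spec (u+1) (u+1)); [|lia].
        right. destruct (Z_le_gt_dec 0 u).
        -- pose proof (IH ltac:(lia) u ltac:(lia)). lia.
        -- lia.
      * destruct (Z.leb_spec v (u-1)), (Z.leb_spec v u), (Z.leb_spec v (u+1)); lia.
    + destruct (b <=? -y-1) eqn:Eb; [apply Z.leb_le in Eb; lia|].
      cbn [andb] in E.
      destruct (a <=? -y-1); cbn [andb] in E;
      destruct (Z.leb_spec v (u-1)), (Z.leb_spec v u); lia.
Qed.

Lemma PA_edge m mvs y t : 1 <= m -> complete_run m mvs -> 0 <= y <= m - 1 ->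
  (t <= length mvs)%nat ->
  (forall j, is_label m j -> j <= -y-1 -> config_at mvs t j <= m - 1 - y) /\
  (forall j1 j2, is_label m j1 -> is_label m j2 -> j1 <= -y-1 -> j2 <= -y-1 ->
     config_at mvs t j1 = m - 1 - y -> config_at mvs t j2 = m - 1 - y -> j1 = j2).
Proof.
  intros Hm Hc Hy Ht. split.
  - intros j Hj Hjy. destruct (Z_le_gt_dec (config_at mvs t j) (m - 1 - y)); auto. exfalso.
    assert (1 <= NA m mvs y t (m - 1 - y + 1)).
    { apply (cntp_one _ _ j (labs_nodup m)); [apply labs_in; auto; lia|].
      apply andb_true_iff; split; apply Z.leb_le; lia. }
    destruct (NA_inv m mvs y Hm Hc Hy t Ht (m - 1 - y + 1) ltac:(lia)); lia.
  - intros j1 j2 H1 H2 Hy1 Hy2 E1 E2. destruct (Z.eq_dec j1 j2); auto. exfalso.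
    assert (2 <= NA m mvs y t (m - 1 - y)).
    { apply (cntp_two _ _ j1 j2 (labs_nodup m)); try (apply labs_in; auto; lia); auto;
      apply andb_true_iff; split; apply Z.leb_le; lia. }
    destruct (NA_inv m mvs y Hm Hc Hy t Ht (m - 1 - y) ltac:(lia)); lia.
Qed.

Definition PA m mvs x y : Prop := forall t, is_move_xy mvs x y t ->
  (forall j, is_label m j -> j <= -y-1 -> config_at mvs t j <= x - y) /\
  (forall j1 j2, is_label m j1 -> is_label m j2 -> j1 <= -y-1 -> j2 <= -y-1 ->
     config_at mvs t j1 = x - y -> config_at mvs t j2 = x - y -> j1 = j2).

Lemma PA_x_edge m mvs y : 1 <= m -> complete_run m mvs -> 0 <= y <= m - 1 -> PA m mvs (m-1) y.
Proof.
  intros Hm Hc Hy t [Ht _]. apply PA_edge; auto. lia.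
Qed.

Lemma before m mvs u t1 t :
  aa m mvs t u < aa m mvs t1 u -> (t1 < t)%nat.
Proof.
  intros H. destruct (Nat.lt_ge_cases t1 t); auto.
  pose proof (Fc_mono mvs u t t1 H0). unfold aa in H. lia.
Qed.

Lemma no_fire_between m mvs u t1 t : aa m mvs t1 u = aa m mvs t u ->
  forall t', (t1 <= t' < t)%nat -> site mvs t' <> u.
Proof.
  intros E t' Ht' Hs. pose proof (Fc_strict mvs u t1 t' t ltac:(lia) ltac:(lia) Hs).
  unfold aa in E. lia.
Qed.

Lemma PA_step_i m mvs x y : 1 <= m -> complete_run m mvs ->
  0 <= x -> x + 1 <= m - 1 -> 0 <= y <= m - 1 -> PA m mvs (x+1) y ->
  forall t, is_move_xy mvs x y t ->
  forall j, is_label m j -> j <= -y-1 -> config_at mvs t j <= x - y.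
Proof.
  intros Hm Hc Hx1 Hx2 Hy IH t Hmv. pose proof Hc as [Hv Hs].
  destruct (move_exists m mvs (x+1) y Hm Hc ltac:(lia) Hy) as [t1 Hmv1].
  destruct (move_formulas m mvs x y t Hm Hc ltac:(lia) Hy Hmv) as [St [A0 [A1 [A2 C]]]].
  destruct (move_formulas m mvs (x+1) y t1 Hm Hc ltac:(lia) Hy Hmv1) as [St1 [B0 [B1 [B2 C1]]]].
  destruct (IH t1 Hmv1) as [IHi IHii].
  replace (x + 1 - y - 1) with (x - y) in * by lia.
  replace (x + 1 - y) with (x - y + 1) in * by lia.
  set (s := x - y) in *.
  assert (Lt : (t1 < t)%nat) by (apply (before m mvs (s+1)); lia).
  assert (NoS : forall t', (S t1 <= t' < t)%nat -> site mvs t' <> s).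
  { intros t' Ht'. apply (no_fire_between m mvs s t1 t); [lia|lia]. }
  destruct Hmv1 as [Ht1 _].
  destruct (legal_at m mvs t1 Hv Ht1) as [La [Lb [Hab [Ha Hb]]]].
  intros j Hj Hjy.
  assert (P1 : config_at mvs (S t1) j <= s).
  { rewrite pos_step by auto.
    destruct (Z.eq_dec j (mvf mvs t1)) as [->|N1].
    - rewrite Ha. lia.
    - destruct (Z.eq_dec j (mvsn mvs t1)) as [->|N2].
      + exfalso. apply (Z.lt_irrefl (mvf mvs t1)).
        rewrite (IHii (mvf mvs t1) (mvsn mvs t1)) at 2; auto; lia.
      + pose proof (IHi j Hj Hjy).
        destruct (Z.eq_dec (config_at mvs t1 j) (s+1)); [|lia].
        exfalso. destruct (only_two m mvs t1 j Hm Hv Ht1 ltac:(rewrite St1; auto) Hj ltac:(lia)); auto. }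
  pose proof (stay_le m mvs s j (S t1) Hv (t - S t1) ltac:(destruct Hmv; lia)
     ltac:(intros t' Ht'; apply NoS; lia) P1).
  replace (S t1 + (t - S t1))%nat with t in H by lia. exact H.
Qed.

Lemma PA_step_ii m mvs x y : 1 <= m -> complete_run m mvs ->
  0 <= x -> x + 1 <= m - 1 -> 0 <= y -> y + 1 <= m - 1 ->
  PA m mvs (x+1) (y+1) -> PA m mvs x (y+1) -> PA m mvs (x+1) y ->
  forall t, is_move_xy mvs x y t ->
  forall j1 j2, is_label m j1 -> is_label m j2 -> j1 <= -y-1 -> j2 <= -y-1 ->
     config_at mvs t j1 = x - y -> config_at mvs t j2 = x - y -> j1 = j2.
Proof.
  intros Hm Hc Hx1 Hx2 Hy1 Hy2 IH0 IH2 IH1 t Hmv. pose proof Hc as [Hv Hs].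
  destruct (move_exists m mvs (x+1) (y+1) Hm Hc ltac:(lia) ltac:(lia)) as [t0 Hmv0].
  destruct (move_exists m mvs (x+1) y Hm Hc ltac:(lia) ltac:(lia)) as [t1 Hmv1].
  destruct (move_exists m mvs x (y+1) Hm Hc ltac:(lia) ltac:(lia)) as [t2 Hmv2].
  destruct (move_formulas m mvs x y t Hm Hc ltac:(lia) ltac:(lia) Hmv) as [St [A0 [A1 [A2 C]]]].
  destruct (move_formulas m mvs (x+1) (y+1) t0 Hm Hc ltac:(lia) ltac:(lia) Hmv0) as [St0 [B0 [B1 [B2 C0]]]].
  destruct (move_formulas m mvs (x+1) y t1 Hm Hc ltac:(lia) ltac:(lia) Hmv1) as [St1 [D0 [D1 [D2 C1]]]].
  destruct (move_formulas m mvs x (y+1) t2 Hm Hc ltac:(lia) ltac:(lia) Hmv2) as [St2 [E0 [E1 [E2 C2]]]].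
  destruct (IH0 t0 Hmv0) as [IH0i IH0ii].
  destruct (IH2 t2 Hmv2) as [IH2i IH2ii].
  destruct (IH1 t1 Hmv1) as [IH1i IH1ii].
  destruct Hmv0 as [Ht0 _]. destruct Hmv1 as [Ht1 _]. destruct Hmv2 as [Ht2 _]. destruct Hmv as [Ht _].
  replace (x + 1 - (y + 1) + 1) with (x - y + 1) in * by lia.
  replace (x + 1 - (y + 1) - 1) with (x - y - 1) in * by lia.
  replace (x + 1 - (y + 1)) with (x - y) in * by lia.
  replace (x + 1 - y + 1) with (x - y + 2) in * by lia.
  replace (x + 1 - y - 1) with (x - y) in * by lia.
  replace (x + 1 - y) with (x - y + 1) in * by lia.
  replace (x - (y + 1) + 1) with (x - y) in * by lia.
  replace (x - (y + 1) - 1) with (x - y - 2) in * by lia.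
  replace (x - (y + 1)) with (x - y - 1) in * by lia.
  replace (- (y + 1) - 1) with (- y - 2) in * by lia.
  set (s := x - y) in *.
  assert (L0 : (t0 < t)%nat) by (apply (before m mvs s); lia).
  assert (L01 : (t0 < t1)%nat) by (apply (before m mvs s); lia).
  assert (AS0 : aa m mvs (S t0) s = aa m mvs t0 s - 1) by (rewrite aa_S, St0, Z.eqb_refl; lia).
  assert (NoS0 : forall t', (S t0 <= t' < t)%nat -> site mvs t' <> s)
    by (apply (no_fire_between m mvs s); lia).
  assert (NoS01 : forall t', (S t0 <= t' < t1)%nat -> site mvs t' <> s)
    by (apply (no_fire_between m mvs s); lia).
  assert (Sp1 : forall t', (t0 <= t' < t)%nat -> site mvs t' = s + 1 -> t' = t1).
  { intros t' Ht' Hst'. apply (Fc_uniq mvs (s+1)); auto.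
    pose proof (Fc_mono mvs (s+1) t0 t' ltac:(lia)).
    pose proof (Fc_mono mvs (s+1) (S t') t ltac:(lia)).
    rewrite Fc_S, Hst', Z.eqb_refl in H0. unfold aa in *. lia. }
  assert (Sp2 : forall t', (t0 <= t' < t)%nat -> site mvs t' = s - 1 -> t' = t2).
  { intros t' Ht' Hst'. apply (Fc_uniq mvs (s-1)); auto.
    pose proof (Fc_mono mvs (s-1) t0 t' ltac:(lia)).
    pose proof (Fc_mono mvs (s-1) (S t') t ltac:(lia)).
    rewrite Fc_S, Hst', Z.eqb_refl in H0. unfold aa in *. lia. }
  destruct (legal_at m mvs t0 Hv Ht0) as [La0 [Lb0 [Hab0 [Ha0 Hb0]]]].
  destruct (legal_at m mvs t1 Hv Ht1) as [La1 [Lb1 [Hab1 [Ha1 Hb1]]]].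
  destruct (legal_at m mvs t2 Hv Ht2) as [La2 [Lb2 [Hab2 [Ha2 Hb2]]]].
  assert (Empty : forall j, is_label m j -> config_at mvs (S t0) j <> s).
  { intros j Hj. rewrite pos_step by auto.
    destruct (Z.eq_dec j (mvf mvs t0)) as [->|N1]; [rewrite Ha0; lia|].
    destruct (Z.eq_dec j (mvsn mvs t0)) as [->|N2]; [rewrite Hb0; lia|].
    intros E. destruct (only_two m mvs t0 j Hm Hv Ht0 ltac:(rewrite St0; auto) Hj ltac:(lia)); auto. }
  assert (Arr : forall j, is_label m j -> config_at mvs t j = s -> j = mvf mvs t1 \/ j = mvsn mvs t2).
  { intros j Hj Ej.
    destruct (arrive mvs s j (S t0) (t - S t0) (Empty j Hj)
       ltac:(replace (S t0 + (t - S t0))%nat with t by lia; auto)) as [t' [Ht' [N1 N2]]].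
    destruct (moved_to m mvs t' j s Hv ltac:(lia) N1 N2) as [[-> Hq]|[-> Hq]].
    - left. f_equal. apply Sp1; auto; lia.
    - right. f_equal. apply Sp2; auto; lia. }
  assert (Alpha : mvf mvs t1 <= -y-1 -> mvf mvs t1 = -y-1).
  { intros Ha. destruct (Z.eq_dec (mvf mvs t1) (-y-1)); auto. exfalso.
    assert (Hal : mvf mvs t1 <= -y-2) by lia.
    pose proof (IH0i (mvf mvs t1) La1 Hal) as P0.
    destruct (Z.eq_dec (mvf mvs t1) (mvsn mvs t0)) as [Eq|Ne].
    - apply (Z.lt_irrefl (mvf mvs t0)).
      rewrite (IH0ii (mvf mvs t0) (mvsn mvs t0)) at 2; auto; lia.
    - assert (P1 : config_at mvs (S t0) (mvf mvs t1) <= s).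
      { rewrite pos_step by auto.
        destruct (Z.eq_dec (mvf mvs t1) (mvf mvs t0)); [lia|].
        destruct (Z.eq_dec (mvf mvs t1) (mvsn mvs t0)); [contradiction|lia]. }
      pose proof (stay_le m mvs s (mvf mvs t1) (S t0) Hv (t1 - S t0) ltac:(lia)
         ltac:(intros t' Ht'; apply NoS01; lia) P1).
      replace (S t0 + (t1 - S t0))%nat with t1 in H by lia. lia. }
  intros j1 j2 H1 H2 Hy1' Hy2' Ej1 Ej2.
  destruct (Z.eq_dec j1 j2) as [|Ne]; auto. exfalso.
  assert (Key : forall a b, a = mvf mvs t1 -> b = mvsn mvs t2 -> a <= -y-1 -> b <= -y-1 -> a <> b -> False).
  { intros a b -> -> Ha Hb Hne. pose proof (Alpha Ha) as Ea.
    assert (Hb' : mvsn mvs t2 <= -y-2) by lia.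
    apply (Z.lt_irrefl (mvf mvs t2)).
    rewrite (IH2ii (mvf mvs t2) (mvsn mvs t2)) at 2; auto; lia. }
  destruct (Arr j1 H1 Ej1) as [F1|F1]; destruct (Arr j2 H2 Ej2) as [F2|F2].
  - apply Ne; congruence.
  - exact (Key j1 j2 F1 F2 Hy1' Hy2' Ne).
  - exact (Key j2 j1 F2 F1 Hy2' Hy1' (fun E => Ne (eq_sym E))).
  - apply Ne; congruence.
Qed.

Lemma PA_all m mvs : 1 <= m -> complete_run m mvs -> forall i j : nat,
  Z.of_nat i <= m - 1 -> Z.of_nat j <= m - 1 ->
  PA m mvs (m - 1 - Z.of_nat i) (m - 1 - Z.of_nat j).
Proof.
  intros Hm Hc. induction i as [|i IHi]; intros j Hi Hj.
  - replace (m - 1 - Z.of_nat 0) with (m - 1) by lia. apply PA_x_edge; auto. lia.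
  - induction j as [|j IHj].
    + set (x := m - 1 - Z.of_nat (S i)). replace (m - 1 - Z.of_nat 0) with (m - 1) by lia.
      assert (IHx : PA m mvs (x+1) (m-1)).
      { replace (x+1) with (m - 1 - Z.of_nat i) by (unfold x; lia).
        replace (m-1) with (m - 1 - Z.of_nat 0) at 2 by lia. apply IHi; lia. }
      intros t Hmv. split.
      * apply (PA_step_i m mvs x (m-1) Hm Hc); auto; unfold x; lia.
      * intros j1 j2 H1 H2 Hy1 Hy2 _ _. unfold is_label in *. lia.
    + set (x := m - 1 - Z.of_nat (S i)). set (y := m - 1 - Z.of_nat (S j)).
      assert (IH1 : PA m mvs (x+1) y).
      { replace (x+1) with (m - 1 - Z.of_nat i) by (unfold x; lia). apply IHi; lia. }
      assert (IH0 : PA m mvs (x+1) (y+1)).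
      { replace (x+1) with (m - 1 - Z.of_nat i) by (unfold x; lia).
        replace (y+1) with (m - 1 - Z.of_nat j) by (unfold y; lia). apply IHi; lia. }
      assert (IH2 : PA m mvs x (y+1)).
      { replace (y+1) with (m - 1 - Z.of_nat j) by (unfold y; lia). apply IHj; lia. }
      intros t Hmv. split.
      * apply (PA_step_i m mvs x y Hm Hc); auto; unfold x, y in *; lia.
      * apply (PA_step_ii m mvs x y Hm Hc); auto; unfold x, y in *; lia.
Qed.

Lemma part1 m mvs : 1 <= m -> complete_run m mvs ->
  forall k x : Z, -m <= k < 0 -> 0 <= x <= m - 1 ->
     exists t : nat, is_move_xy mvs x (- k - 1) t /\ config_at mvs t k <= x + k + 1.
Proof.
  intros Hm Hc k x Hk Hx.
  destruct (move_exists m mvs x (-k-1) Hm Hc Hx ltac:(lia)) as [t Hmv].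
  exists t. split; auto.
  pose proof (PA_all m mvs Hm Hc (Z.to_nat (m - 1 - x)) (Z.to_nat (m - 1 - (-k-1))) ltac:(lia) ltac:(lia)) as P.
  replace (m - 1 - Z.of_nat (Z.to_nat (m - 1 - x))) with x in P by lia.
  replace (m - 1 - Z.of_nat (Z.to_nat (m - 1 - (-k-1)))) with (-k-1) in P by lia.
  destruct (P t Hmv) as [Pi _].
  pose proof (Pi k ltac:(unfold is_label; lia) ltac:(lia)). lia.
Qed.

Definition mirror (mvs : list (Z*Z)) : list (Z*Z) := map (fun p => (- snd p, - fst p)) mvs.

Lemma mirror_len mvs : length (mirror mvs) = length mvs.
Proof. unfold mirror. apply length_map. Qed.

Lemma mirror_nth mvs t : nth t (mirror mvs) (0,0) = (- snd (nth t mvs (0,0)), - fst (nth t mvs (0,0))).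
Proof.
  unfold mirror. change (0,0) with ((fun p : Z*Z => (- snd p, - fst p)) (0,0)) at 1.
  rewrite map_nth. reflexivity.
Qed.

Lemma Forall_firstn {A} (P : A -> Prop) n l : Forall P l -> Forall P (firstn n l).
Proof.
  revert n; induction l as [|h l IH]; intros n H; destruct n; simpl; auto.
  inversion H; subst. constructor; auto.
Qed.

Lemma fold_mirror l : Forall (fun p : Z*Z => fst p <> snd p) l -> forall c c',
  (forall j, c' j = - c (-j)) ->
  forall j, fold_left fire (map (fun p => (- snd p, - fst p)) l) c' j = - fold_left fire l c (-j).
Proof.
  induction l as [|[a b] l IH]; intros HF c c' Hc j; simpl; auto.
  inversion HF as [|? ? Hab HF']; subst. simpl in Hab.
  apply IH; auto. intros i. unfold fire; cbn [fst snd]. rewrite !Hc, ?Z.opp_involutive.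
  destruct (Z.eq_dec i (-b)) as [->|N1].
  - rewrite Z.opp_involutive. destruct (Z.eq_dec b a); [congruence|].
    destruct (Z.eq_dec b b); [lia|congruence].
  - destruct (Z.eq_dec i (-a)) as [->|N2].
    + rewrite Z.opp_involutive. destruct (Z.eq_dec a a); [lia|congruence].
    + destruct (Z.eq_dec (-i) a); [lia|]. destruct (Z.eq_dec (-i) b); [lia|]. reflexivity.
Qed.

Lemma valid_forall m mvs : valid_run m mvs -> Forall (fun p : Z*Z => fst p <> snd p) mvs.
Proof.
  intros Hv. apply Forall_forall. intros p Hp.
  destruct (In_nth mvs p (0,0) Hp) as [t [Ht <-]].
  destruct (Hv t Ht) as [_ [_ [H _]]]. lia.
Qed.

Lemma mirror_config m mvs t j : valid_run m mvs ->
  config_at (mirror mvs) t j = - config_at mvs t (-j).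
Proof.
  intros Hv. unfold config_at, mirror. rewrite firstn_map.
  apply fold_mirror; [apply Forall_firstn, (valid_forall m mvs Hv)|].
  intros i. unfold init_config. lia.
Qed.

Lemma mirror_site m mvs t : valid_run m mvs -> (t < length mvs)%nat ->
  site (mirror mvs) t = - site mvs t.
Proof.
  intros Hv Ht. unfold site. rewrite mirror_nth. simpl.
  rewrite (mirror_config m mvs t _ Hv). rewrite Z.opp_involutive.
  destruct (Hv t Ht) as [_ [_ [_ E]]]. rewrite E. reflexivity.
Qed.

Lemma mirror_fa m mvs s t : valid_run m mvs ->
  firings_after (mirror mvs) s t = firings_after mvs (-s) t.
Proof.
  intros Hv. unfold firings_after. rewrite mirror_len. f_equal.
  apply filter_ext_in. intros t' Ht'. apply in_seq in Ht'.
  rewrite (mirror_site m mvs t' Hv) by lia.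
  destruct (Z.eqb_spec (- site mvs t') s), (Z.eqb_spec (site mvs t') (-s)); auto; lia.
Qed.

Lemma mirror_complete m mvs : complete_run m mvs -> complete_run m (mirror mvs).
Proof.
  intros [Hv Hs]. split.
  - intros t Ht. rewrite mirror_len in Ht. rewrite mirror_nth. simpl.
    destruct (Hv t Ht) as [La [Lb [Hab E]]]. unfold is_label in *.
    unfold legal, is_label; cbn [fst snd]. split; [lia|]. split; [lia|]. split; [lia|].
    rewrite !(mirror_config m mvs t _ Hv), !Z.opp_involutive. congruence.
  - intros k l Hk Hl Hkl. rewrite mirror_len, !(mirror_config m mvs _ _ Hv).
    intros E. apply (Hs (-k) (-l)); unfold is_label in *; try lia.
Qed.

Lemma mirror_move m mvs x y t : valid_run m mvs ->
  is_move_xy (mirror mvs) x y t -> is_move_xy mvs y x t.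
Proof.
  intros Hv [Ht [Hs Hf]]. rewrite mirror_len in Ht.
  split; auto. rewrite (mirror_site m mvs t Hv Ht) in Hs. split; [lia|].
  rewrite (mirror_fa m mvs _ _ Hv) in Hf. replace (- (x - y)) with (y - x) in Hf by lia.
  rewrite Hf. f_equal. lia.
Qed.

Theorem lemma2p9 (m : Z) (hm : 1 <= m) (mvs : list (Z * Z))
  (hrun : complete_run m mvs) :
  (forall k x : Z, -m <= k < 0 -> 0 <= x <= m - 1 ->
     exists t : nat, is_move_xy mvs x (- k - 1) t /\
                     config_at mvs t k <= x + k + 1) /\
  (forall k y : Z, 0 < k <= m -> 0 <= y <= m - 1 ->
     exists t : nat, is_move_xy mvs (k - 1) y t /\
                     config_at mvs t k >= k - 1 - y).
Proof.
  split; [apply part1; auto|].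
  intros k y Hk Hy. pose proof hrun as [Hv _].
  destruct (part1 m (mirror mvs) hm (mirror_complete m mvs hrun) (-k) y ltac:(lia) Hy)
    as [t [Hmv Hp]].
  exists t. split.
  - apply (mirror_move m mvs y (- - k - 1) t Hv) in Hmv.
    replace (- - k - 1) with (k - 1) in Hmv by lia. exact Hmv.
  - rewrite (mirror_config m mvs t _ Hv) in Hp. rewrite Z.opp_involutive in Hp. lia.
Qed.
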